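(* Let $A\in \mathbb{Z}^{m\times n}$, $b\in \mathbb{Z}^m$ and $p$ a prime. Then exactly one of the following holds: either $Ax=b$ has a $p$-adic solution $x$, or there exists $y\in \mathbb{R}^m$ such that $y^\top A$ is integral and $y^\top b$ is not a $p$-adic rational.
   Context: A $p$-adic rational is a number $a/p^k$ with $a,k\in\mathbb{Z}$, $k\ge0$; a vector is $p$-adic if all entries are $p$-adic rationals. *)

(* Defs.v *)
From HB Require Import structures.
From mathcomp Require Import all_boot all_order all_algebra.
From mathcomp Require Import Rstruct.
From Stdlib Require Import Reals.
Set Implicit Arguments. Unset Strict Implicit. Unset Printing Implicit Defensive.
Import Order.TTheory GRing.Theory Num.Theory.
Local Open Scope ring_scope.

Definition padic_rat (p : nat) (x : R) : Prop :=
  exists (a : int) (k : nat), x = a%:~R / (p%:R ^+ k).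

Definition integral (x : R) : Prop := exists z : int, x = z%:~R.

Definition intmx (m n : nat) (A : 'M[int]_(m, n)) : 'M[R]_(m, n) :=
  map_mx (fun z : int => z%:~R) A.

(* Main.v *)
Require Import Defs.
From HB Require Import structures.
From mathcomp Require Import all_boot all_order all_algebra.
From mathcomp Require Import Rstruct.
From Stdlib Require Import Reals.
From Stdlib Require Import Classical.
From mathcomp Require Import ring.
Import Order.TTheory GRing.Theory Num.Theory.
Local Open Scope ring_scope.

Lemma intmxM m n k (M : 'M[int]_(m,n)) (N : 'M[int]_(n,k)) : intmx (M *m N) = intmx M *m intmx N.
Proof. rewrite /intmx. exact: map_mxM. Qed.

Lemma intmx1 n : intmx (1%:M : 'M[int]_n) = 1%:M.
Proof. rewrite /intmx. exact: map_mx1. Qed.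

Section P.
Variable p : nat.
Hypothesis p0 : leq 1 p.

Lemma pR0 k : (p%:R : R) ^+ k != 0.
Proof. by rewrite expf_neq0 // pnatr_eq0 -lt0n. Qed.

Lemma padic_int (z : int) : padic_rat p z%:~R.
Proof. by exists z, 0%N; rewrite expr0 divr1. Qed.

Lemma padic_add x y s : s = x + y -> padic_rat p x -> padic_rat p y -> padic_rat p s.
Proof.
move=> -> [a [k ->]] [b [l ->]].
exists (a * (p%:Z ^+ l) + b * (p%:Z ^+ k)), (k + l)%N.
have h1 := pR0 k; have h2 := pR0 l.
rewrite exprD rmorphD !rmorphM /= !rmorphXn /=.
rewrite -[(p%:Z)%:~R]/((p%:R : R)).
rewrite mulrDl invfM !mulrA mulfK // [_ * _^-1 * _]mulrAC mulfK //.
Qed.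

Lemma padic_mulz (z : int) x s : s = z%:~R * x -> padic_rat p x -> padic_rat p s.
Proof. move=> -> [a [k ->]]; exists (z * a), k; by rewrite mulrA -intrM. Qed.

Lemma padic_sum (I : finType) (F : I -> R) : (forall i, padic_rat p (F i)) ->
  padic_rat p (\sum_i F i).
Proof.
move=> h; apply: (big_ind (padic_rat p)) => //; first exact: (padic_int 0).
by move=> x y; apply: padic_add.
Qed.

Lemma not_padic_inv s : s = (p.+1)%:R^-1 -> ~ padic_rat p s.
Proof.
move=> -> [a [k h]].
have hk := pR0 k.
have e : (p%:R : R) ^+ k = a%:~R * (p.+1)%:R.
  have hp1 : ((p.+1)%:R : R) != 0 by rewrite pnatr_eq0.
  move: h => /(congr1 (fun t => t * ((p%:R : R) ^+ k) * (p.+1)%:R)).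
  by rewrite mulrAC mulVf // mul1r divfK // => ->.
have e' : ((expn p k)%:Z) = a * (p.+1)%:Z.
  apply: (@intr_inj R); rewrite rmorphM /= -[X in X = _]/((expn p k)%:R : R) natrX e //.
have : dvdn p.+1 (expn p k).
  apply/dvdnP; exists (absz a). apply/eqP; rewrite -(eqr_nat int) natrM.
  rewrite !natz e' abszE ger0_norm //.
  have : (0 <= a * (p.+1)%:Z) by rewrite -e'.
  by rewrite pmulr_lge0.
move=> /gcdn_idPl hg.
have := coprimeXr k (coprimeSn p); rewrite /coprime hg => /eqP [] hp.
by move: p0; rewrite hp.
Qed.

Lemma integral_int (z : int) : integral z%:~R.
Proof. by exists z. Qed.
Lemma integral_add x y s : s = x + y -> integral x -> integral y -> integral s.
Proof. by move=> -> [a ->] [b ->]; exists (a + b); rewrite rmorphD. Qed.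
Lemma integral_mul x y s : s = x * y -> integral x -> integral y -> integral s.
Proof. by move=> -> [a ->] [b ->]; exists (a * b); rewrite rmorphM. Qed.
Lemma integral_sum (I : finType) (F : I -> R) : (forall i, integral (F i)) ->
  integral (\sum_i F i).
Proof.
move=> h; apply: (big_ind integral) => //; first exact: (integral_int 0).
by move=> x y; apply: integral_add.
Qed.
End P.

Lemma intmxE m n (M : 'M[int]_(m,n)) i j : intmx M i j = (M i j)%:~R.
Proof. by rewrite /intmx mxE. Qed.

Lemma intmx_inv n (M : 'M[int]_n) : M \in unitmx ->
  intmx M *m intmx (invmx M) = 1%:M /\ intmx (invmx M) *m intmx M = 1%:M.
Proof.
move=> hM; by rewrite -!intmxM mulmxV // mulVmx // intmx1.
Qed.

Theorem lemma2p3 (m n : nat) (A : 'M[int]_(m, n)) (b : 'cV[int]_m) (p : nat)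
  (hp : prime p) :
  let P := exists x : 'cV[R]_n,
             (forall i, padic_rat p (x i 0)) /\ intmx A *m x = intmx b in
  let Q := exists y : 'rV[R]_m,
             (forall j, integral ((y *m intmx A) 0 j)) /\
             ~ padic_rat p ((y *m intmx b) 0 0) in
  (P \/ Q) /\ ~ (P /\ Q).
Proof.
have p0 : leq 1 p := prime_gt0 hp.
move=> P Q; split; last first.
  move=> [[x [hx hAx]] [y [hyA hyb]]]; apply: hyb.
  have -> : (y *m intmx b) 0 0 = \sum_j (y *m intmx A) 0 j * x j 0.
    by rewrite -hAx mulmxA mxE.
  apply: (@padic_sum p p0 _ (fun j => (y *m intmx A) 0 j * x j 0)) => j.
  have [z hz] := hyA j.
  by apply: (@padic_mulz p z (x j 0)); [rewrite hz | exact: hx].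
have [L hL [Rm hR [d _ hA]]] := int_Smith_normal_form A.
have [hLL hLL'] := @intmx_inv _ _ hL.
have [hRR hRR'] := @intmx_inv _ _ hR.
set Dm := \matrix_(i, j) _ in hA.
set L' := intmx L in hLL hLL'. set Li' := intmx (invmx L) in hLL hLL'.
set R' := intmx Rm in hRR hRR'. set Ri' := intmx (invmx Rm) in hRR hRR'.
set Dr := intmx Dm.
have hA' : intmx A = L' *m Dr *m R' by rewrite hA !intmxM.
set s := fun i => \sum_j Dr i j.
have hD : forall i j, Dr i j = s i *+ (i == j :> nat).
  move=> i j; rewrite /s.
  case h: (i == j :> nat); last by rewrite intmxE mxE h mulr0n.
  rewrite mulr1n (bigD1 j) //= big1 ?addr0 // => j' hj'.
  rewrite intmxE mxE; case e: (i == j' :> nat); last by rewrite mulr0n.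
  exfalso; move/eqP: hj'; apply; apply: val_inj; by rewrite /= -(eqP e) (eqP h).
set c := Li' *m intmx b.
pose G i := exists t, padic_rat p t /\ s i * t = c i 0.
case: (classic (exists i, ~ G i)) => [[i hi] | hG].
  right.
  have hyA : forall u, (u *: (delta_mx (0 : 'I_1) i *m Li')) *m intmx A = u *: (row i Dr *m R').
    move=> u; rewrite hA' -scalemxAl !mulmxA -(mulmxA _ Li' L') hLL' mulmx1 rowE.
    by [].
  have hyb : forall u, ((u *: (delta_mx (0 : 'I_1) i *m Li')) *m intmx b) 0 0 = u * c i 0.
    by move=> u; rewrite -scalemxAl -mulmxA -rowE !mxE.
  case: (eqVneq (s i) 0) => hs.
    have hc : c i 0 != 0.
      apply/eqP => hc; apply: hi; exists 0; split; first exact: (padic_int p 0).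
      by rewrite hs hc mulr0.
    exists (((c i 0) * (p.+1)%:R)^-1 *: (delta_mx (0 : 'I_1) i *m Li')); split.
      move=> j; rewrite hyA.
      have -> : row i Dr = 0 by apply/matrixP => k l; rewrite mxE hD hs mul0rn mxE.
      by rewrite mul0mx scaler0 mxE; exact: (integral_int 0).
    rewrite hyb => hh; apply: (not_padic_inv _ p0 _ _ hh).
    by rewrite invfM mulrAC mulVf // mul1r.
  exists ((s i)^-1 *: (delta_mx (0 : 'I_1) i *m Li')); split.
    move=> k; rewrite hyA !mxE mulr_sumr.
    apply: (@integral_sum _ (fun j => (s i)^-1 * (row i Dr 0 j * R' j k))) => j.
    apply: (@integral_mul (GRing.mul (s i)^-1 (row i Dr 0 j)) (R' j k)).
    - by rewrite mulrA.
    - rewrite mxE hD mulrnAr mulVf //; exists ((i == j :> nat)%:R); by case: (i == j :> nat).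
    - by rewrite /R' intmxE; exact: integral_int.
  rewrite hyb => hpc; apply: hi; exists (GRing.mul (s i)^-1 (c i 0)); split => //.
  by rewrite mulVKf.
have hG' : forall i, G i.
  by move=> i; apply: NNPP => ni; apply: hG; exists i.
have [t ht] := fin_all_exists hG'.
left.
pose z : 'cV[R]_n := \col_j (\sum_i (t i) *+ (i == j :> nat)).
exists (Ri' *m z); split.
  move=> k; rewrite mxE; apply: (@padic_sum p p0 _ (fun j => Ri' k j * z j 0)) => j.
  apply: (@padic_mulz p (invmx Rm k j) (z j 0)); first by rewrite /Ri' intmxE.
  rewrite mxE; apply: (@padic_sum p p0 _ (fun i => t i *+ (i == j :> nat))) => i.
  case: (i == j :> nat); first by rewrite mulr1n; exact: (ht i).1.
  by rewrite mulr0n; exact: (padic_int p 0).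
rewrite hA' -!mulmxA (mulmxA R') hRR mul1mx.
have -> : Dr *m z = c.
  apply/matrixP => i k; rewrite ord1 mxE -(ht i).2.
  have -> : \sum_j Dr i j * z j 0 = \sum_j Dr i j * t i.
    apply: eq_bigr => j _; rewrite hD.
    case h: (i == j :> nat); last by rewrite !mulr0n !mul0r.
    congr (_ * _); rewrite mxE (bigD1 i) //= h mulr1n big1 ?addr0 // => i' hi'.
    case e: (i' == j :> nat); last by rewrite mulr0n.
    exfalso; move/eqP: hi'; apply; apply: val_inj; by rewrite /= (eqP e) (eqP h).
  by rewrite -mulr_suml.
by rewrite /c mulmxA hLL mul1mx.
Qed.
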